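(* For every integer $k \geq 1$, let $\mathcal{C}(k)$ denote the greatest common divisor of all the sums $\sum_{i=1}^{k} C_{n+i}$, $n \geq 0$. Then $$\mathcal{C}(k) = \begin{cases} 2P_{k}, & \text{if } k \text{ is even};\\ Q_{k}, & \text{if } k \text{ is odd}.\end{cases}$$
   Context: The Pell sequence $(P_n)_{n\ge0}$ is defined by $P_0=0$, $P_1=1$, $P_n = 2P_{n-1}+P_{n-2}$. The associated Pell sequence $(Q_n)_{n\ge0}$ is defined by $Q_0=1$, $Q_1=1$, $Q_n=2Q_{n-1}+Q_{n-2}$. The Lucas-balancing sequence $(C_n)_{n\ge0}$ is defined by $C_0=1$, $C_1=3$, $C_n=6C_{n-1}-C_{n-2}$. *)

(* Defs.v *)
From mathcomp Require Import all_boot.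
Set Implicit Arguments. Unset Strict Implicit. Unset Printing Implicit Defensive.

Fixpoint Pell (n : nat) : nat :=
  match n with
  | 0 => 0
  | 1 => 1
  | S ((S m) as m1) => 2 * Pell m1 + Pell m
  end.

Fixpoint Qell (n : nat) : nat :=
  match n with
  | 0 => 1
  | 1 => 1
  | S ((S m) as m1) => 2 * Qell m1 + Qell m
  end.

(* Lucas-balancing numbers: C_0 = 1, C_1 = 3, C_n = 6 C_(n-1) - C_(n-2).
   The sequence is positive and increasing, so the truncated nat
   subtraction never truncates (6 C_(n-1) >= C_(n-2)). *)
Fixpoint LucBal (n : nat) : nat :=
  match n with
  | 0 => 1
  | 1 => 3
  | S ((S m) as m1) => 6 * LucBal m1 - LucBal m
  end.

Definition is_gcd_family (S : nat -> nat) (g : nat) : Prop :=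
  (forall n, g %| S n) /\ (forall d, (forall n, d %| S n) -> d %| g).

Definition LBsum (k n : nat) : nat := \sum_(1 <= i < k.+1) LucBal (n + i).

(* Main.v *)
Require Import Defs.
From mathcomp Require Import all_boot.
From mathcomp Require Import zify.

Lemma PS n : Pell n.+2 = 2 * Pell n.+1 + Pell n. Proof. by []. Qed.
Lemma QS n : Qell n.+2 = 2 * Qell n.+1 + Qell n. Proof. by []. Qed.

Lemma LS n : LucBal n.+2 = 6 * LucBal n.+1 - LucBal n. Proof. by []. Qed.

Lemma PQstep n : Qell n.+1 = Qell n + 2 * Pell n /\ Pell n.+1 = Pell n + Qell n.
Proof.
elim: n => [|n [IH1 IH2]]; first by [].
rewrite QS PS IH1 IH2; lia.
Qed.

Lemma Qadd a b : Qell (a + b) = Qell a * Qell b + 2 * (Pell a * Pell b)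
  /\ Pell (a + b) = Pell a * Qell b + Qell a * Pell b.
Proof.
elim: b => [|b [IH1 IH2]]; first by rewrite addn0 /=; lia.
rewrite addnS; have [E1 E2] := PQstep (a + b); have [F1 F2] := PQstep b.
rewrite E1 E2 F1 F2 IH1 IH2; split; nia.
Qed.

Lemma cassini k : if odd k then 2 * (Pell k * Pell k) = Qell k * Qell k + 1
  else Qell k * Qell k = 2 * (Pell k * Pell k) + 1.
Proof.
elim: k => [|k IH]; first by [].
have [E1 E2] := PQstep k; rewrite E1 E2 [odd _]/=.
by case: (odd k) IH => /= IH; nia.
Qed.

Lemma LBQ n : LucBal n = Qell n.*2 /\ LucBal n.+1 = Qell n.+1.*2.
Proof.
elim: n => [|n [IH1 IH2]]; first by [].
split; first by [].
rewrite LS IH1 IH2 !doubleS !QS; lia.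
Qed.

Lemma sumQ k n : 2 * LBsum k n + Qell (2 * n + 1) = Qell (2 * n + 2 * k + 1).
Proof.
elim: k => [|k IH]; first by rewrite /LBsum big_geq // addn0.
rewrite /LBsum big_nat_recr //= -/(LBsum k n).
have [-> _] := LBQ (n + k.+1).
have -> : 2 * n + 2 * k.+1 + 1 = (2 * n + 2 * k + 1).+2 by lia.
rewrite QS -IH.
have -> : (n + k.+1).*2 = (2 * n + 2 * k + 1).+1 by rewrite -muln2; lia.
lia.
Qed.

Lemma closed_odd c k : odd k -> Qell (c + 2 * k) = Qell c + 2 * (Qell k * Qell (c + k)).
Proof.
move=> ok; have := cassini k; rewrite ok => H.
have -> : c + 2 * k = (c + k) + k by lia.
have [A1 A2] := Qadd (c + k) k; have [B1 B2] := Qadd c k.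
rewrite A1 B2 B1.
have H' : Qell c * (2 * (Pell k * Pell k)) = Qell c * (Qell k * Qell k + 1) by rewrite H.
nia.
Qed.

Lemma closed_even c k : ~~ odd k -> Qell (c + 2 * k) = Qell c + 4 * (Pell k * Pell (c + k)).
Proof.
move=> ok; have := cassini k; rewrite (negbTE ok) => H.
have -> : c + 2 * k = (c + k) + k by lia.
have [A1 A2] := Qadd (c + k) k; have [B1 B2] := Qadd c k.
rewrite A1 B2 B1.
have H' : Qell c * (Qell k * Qell k) = Qell c * (2 * (Pell k * Pell k) + 1) by rewrite H.
nia.
Qed.

Lemma LBsum_closed k n : LBsum k n =
  if odd k then Qell k * Qell (2 * n + k + 1) else 2 * Pell k * Pell (2 * n + k + 1).
Proof.
have := sumQ k n.
have -> : 2 * n + 2 * k + 1 = (2 * n + 1) + 2 * k by lia.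
have -> : 2 * n + k + 1 = (2 * n + 1) + k by lia.
case: ifP => ok.
  rewrite closed_odd //; lia.
rewrite closed_even ?ok //; lia.
Qed.

Lemma Qodd n : odd (Qell n) /\ odd (Qell n.+1).
Proof.
elim: n => [|n [IH1 IH2]]; first by [].
by rewrite QS oddD oddM /= IH1 IH2.
Qed.

Lemma Podd n : odd (Pell n) = odd n /\ odd (Pell n.+1) = ~~ odd n.
Proof.
elim: n => [|n [IH1 IH2]]; first by [].
by rewrite PS oddD oddM /= IH1 IH2 /= negbK.
Qed.

Lemma Qcop n : coprime (Qell n) (Qell n.+1).
Proof.
elim: n => [|n IH]; first by [].
by rewrite /coprime QS gcdnMDl -/(coprime _ _) coprime_sym.
Qed.

Lemma Pcop n : coprime (Pell n) (Pell n.+1).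
Proof.
elim: n => [|n IH]; first by [].
by rewrite /coprime PS gcdnMDl -/(coprime _ _) coprime_sym.
Qed.

Theorem theorem18 (k : nat) (hk : 1 <= k) :
  is_gcd_family (LBsum k) (if odd k then Qell k else 2 * Pell k).
Proof.
split.
  move=> n; rewrite LBsum_closed; case: ifP => _; exact: dvdn_mulr.
move=> d Hd; have H0 := Hd 0; have H1 := Hd 1.
rewrite !LBsum_closed in H0 H1.
have E1 : 2 * 1 + k + 1 = (k.+1).+2 by lia.
have E0 : 2 * 0 + k + 1 = k.+1 by lia.
rewrite E1 E0 in H1 H0.
case: ifP => ok; rewrite ok in H0 H1.
  have : d %| gcdn (Qell k * Qell k.+1) (Qell k * Qell k.+3) by rewrite dvdn_gcd H0 H1.
  rewrite -muln_gcdr.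
  suff -> : gcdn (Qell k.+1) (Qell k.+3) = 1 by rewrite muln1.
  apply/eqP; rewrite QS gcdnDr -/(coprime _ _) coprimeMr coprimen2 Qcop andbT.
  by case: (Qodd k.+1).
have : d %| gcdn (2 * Pell k * Pell k.+1) (2 * Pell k * Pell k.+3) by rewrite dvdn_gcd H0 H1.
  rewrite -muln_gcdr.
suff -> : gcdn (Pell k.+1) (Pell k.+3) = 1 by rewrite muln1.
apply/eqP; rewrite PS gcdnDr -/(coprime _ _) coprimeMr coprimen2 Pcop andbT.
by case: (Podd k.+1) => -> _ /=; rewrite ok.
Qed.
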